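(* If $G$ is a finite simple graph of order $n$ with at least one edge such that $G[\mathrm{core}(G)]$ is Class 1, then $\mathrm{es}_{\Delta}(G)\leq \frac{n}{2}$. In particular, if $G$ is a Class 1 graph, then $\mathrm{es}_{\Delta}(G)\leq\frac{n}{2}$.
   Context: $\mathrm{core}(G)$ is the set of vertices of $G$ of maximum degree $\Delta(G)$. A graph $H$ is Class 1 if its chromatic index equals its maximum degree; in the first statement this is interpreted as $G[\mathrm{core}(G)]$ having a proper $\Delta(G)$-edge coloring. $\mathrm{es}_{\Delta}(G)$ is the minimum number of edges of $G$ whose removal results in a subgraph with maximum degree $\Delta(G)-1$. *)

(* Defs.v *)
From mathcomp Require Import all_boot.
Set Implicit Arguments. Unset Strict Implicit. Unset Printing Implicit Defensive.

Section Graphs.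
Variable T : finType.

Definition simple_graph (e : rel T) : Prop := symmetric e /\ irreflexive e.

Definition deg (e : rel T) (x : T) : nat := #|[set y | e x y]|.

Definition Delta (e : rel T) : nat := \max_(x : T) deg e x.

Definition core (e : rel T) : {set T} := [set x | deg e x == Delta e].

(* induced subgraph G[S] (on the same vertex type; vertices outside S are isolated
   and do not affect edges, degrees of S, or edge colourings) *)
Definition induced (e : rel T) (S : {set T}) : rel T :=
  fun x y => [&& x \in S, y \in S & e x y].

Definition edges (e : rel T) : {set {set T}} :=
  [set A : {set T} | [exists x, exists y, e x y && (A == [set x; y])]].

Definition remove_edges (e : rel T) (F : {set {set T}}) : rel T :=
  fun x y => e x y && ([set x; y] \notin F).

Definition proper_edge_colouring (e : rel T) (k : nat)
    (c : {ffun {set T} -> 'I_k}) : bool :=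
  [forall A : {set T}, forall B : {set T},
    [&& A \in edges e, B \in edges e, A != B & A :&: B != set0] ==> (c A != c B)].

Definition edge_colourable (e : rel T) (k : nat) : bool :=
  [exists c : {ffun {set T} -> 'I_k}, proper_edge_colouring e c].

(* chromatic index: least k admitting a proper k-edge colouring
   (k = #|edges e| always suffices, used as default bound) *)
Definition chromatic_index (e : rel T) : nat :=
  \big[minn/#|edges e|]_(k < (#|edges e|).+1 | edge_colourable e k) k.

Definition class1 (e : rel T) : Prop := chromatic_index e = Delta e.

Definition esDelta (e : rel T) : nat :=
  \big[minn/#|edges e|]_(F : {set {set T}} |
      (F \subset edges e) && (Delta (remove_edges e F) == (Delta e).-1)) #|F|.

End Graphs.

(* Main.v *)
Require Import Defs.
From mathcomp Require Import all_boot.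
From mathcomp Require Import zify.
Set Implicit Arguments. Unset Strict Implicit. Unset Printing Implicit Defensive.

Lemma bigmin_le (I : finType) (P : pred I) (F : I -> nat) (x0 : nat) j :
  P j -> \big[minn/x0]_(i | P i) F i <= F j.
Proof.
move=> Pj; rewrite -big_filter.
have : j \in [seq i <- index_enum I | P i] by rewrite mem_filter Pj mem_index_enum.
elim: [seq i <- index_enum I | P i] => //= a s IH.
rewrite in_cons big_cons => /orP [/eqP<-|/IH H]; first exact: geq_minl.
exact: leq_trans (geq_minr _ _) H.
Qed.

Lemma edgesP (T : finType) (g : rel T) A :
  reflect (exists x y, g x y /\ A = [set x; y]) (A \in edges g).
Proof.
rewrite /edges inE; apply: (iffP existsP) => [[x /existsP [y /andP [gxy /eqP ->]]]|[x [y [gxy ->]]]].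
  by exists x, y.
by exists x; apply/existsP; exists y; rewrite gxy eqxx.
Qed.

Lemma card_ind (I : finType) (P : pred I) : #|[set x | P x]| = \sum_x P x.
Proof.
rewrite -sum1_card big_mkcond /=; apply: eq_bigr => x _; rewrite inE.
by case: (P x).
Qed.

Section Main.
Variable T : finType.
Variable e : rel T.
Hypothesis Hs : symmetric e.
Hypothesis Hi : irreflexive e.

Local Notation C := (core e).
Local Notation D := (Delta e).

Lemma deg_le x : deg e x <= D.
Proof. by rewrite /Delta; exact: leq_bigmax. Qed.

Lemma deg_noncore x : x \notin C -> deg e x < D.
Proof. by rewrite inE ltn_neqAle deg_le andbT. Qed.

Lemma set2_inj (x y z : T) : x != y -> [set x; y] = [set x; z] -> y = z.
Proof.
move=> nxy E; have : y \in [set x; z] by rewrite -E set22.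
by case/set2P => // yx; move: nxy; rewrite yx eqxx.
Qed.

Lemma neq_of_e x y : e x y -> x != y.
Proof. by move=> exy; apply/eqP => xy; move: exy; rewrite xy Hi. Qed.

Variable c : {ffun {set T} -> 'I_D}.
Hypothesis Hc : proper_edge_colouring (induced e C) c.
Local Notation e' := (induced e C).

Lemma proper A B : A \in edges e' -> B \in edges e' -> c A = c B -> A :&: B != set0 -> A = B.
Proof.
move=> EA EB cAB nI; apply/eqP; apply: contraT => nAB.
move/forallP: Hc => /(_ A) /forallP /(_ B); rewrite EA EB nAB nI /= cAB.
by rewrite eqxx.
Qed.

Definition F1 (i : 'I_D) := [set A in edges e' | c A == i].
Definition U i := C :\: cover (F1 i).
Definition q v := odflt v [pick w | e v w && (w \notin C)].
Definition F2 i := [set [set v; q v] | v in U i].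
Definition F i := F1 i :|: F2 i.

Lemma F1P i A : A \in F1 i -> exists x y, [/\ e x y, x \in C, y \in C, A = [set x; y] & c A = i].
Proof.
rewrite inE => /andP [/edgesP [x [y [exy ->]]] /eqP ci].
move: exy; rewrite /induced => /and3P [xC yC exy].
by exists x, y.
Qed.


Lemma F1_card i A : A \in F1 i -> #|A| = 2.
Proof. by case/F1P => x [y [exy _ _ -> _]]; rewrite cards2 neq_of_e. Qed.

Lemma F1_edge i A : A \in F1 i -> A \in edges e'.
Proof. by rewrite inE => /andP []. Qed.

Lemma F1_col i A : A \in F1 i -> c A = i.
Proof. by rewrite inE => /andP [_ /eqP]. Qed.

Lemma F1_triv i : trivIset (F1 i).
Proof.
apply/trivIsetP => A B HA HB nAB; rewrite -setI_eq0; apply: contraR nAB => nI.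
by apply/eqP; apply: proper (F1_edge HA) (F1_edge HB) _ nI; rewrite !(F1_col HA, F1_col HB).
Qed.

Lemma cover_F1 i : cover (F1 i) \subset C.
Proof.
apply/subsetP => x /bigcupP [A HA xA]; case/F1P: HA xA => a [b [_ aC bC -> _]].
by case/set2P => ->.
Qed.

Lemma F1_sub i : F1 i \subset edges e.
Proof.
apply/subsetP => A /F1P [x [y [exy _ _ -> _]]]; apply/edgesP; by exists x, y.
Qed.

Lemma in_cover i x : x \in cover (F1 i) -> exists y, e x y /\ [set x; y] \in F1 i.
Proof.
move=> /bigcupP [A HA xA]; have HA' := HA; case/F1P: HA xA => a [b [eab _ _ Ae _]].
rewrite Ae; case/set2P => ->.
  by exists b; rewrite -Ae.
by exists a; rewrite Hs eab setUC -Ae.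
Qed.

Lemma nbr_core_le v : #|[set u | e' v u]| <= #|[set i | v \in cover (F1 i)]|.
Proof.
rewrite -(card_in_imset (f := fun u => c [set v; u])).
  apply: subset_leq_card; apply/subsetP => j /imsetP [u]; rewrite inE => evu ->.
  rewrite inE; apply/bigcupP; exists [set v; u]; last exact: set21.
  by rewrite inE eqxx andbT; apply/edgesP; exists v, u.
move=> u1 u2; rewrite !inE => e1 e2 ceq.
have nvu1 : v != u1 by apply: neq_of_e; move/and3P: e1 => [].
apply: set2_inj nvu1 _; apply: proper ceq _.
- by apply/edgesP; exists v, u1.
- by apply/edgesP; exists v, u2.
- by apply/set0Pn; exists v; rewrite inE !set21.
Qed.

Lemma deg_split v : v \in C ->
  #|[set u | e' v u]| + #|[set u | e v u && (u \notin C)]| = D.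
Proof.
move=> vC; have := cardsID C [set u | e v u].
have -> : [set u | e v u] :&: C = [set u | e' v u].
  by rewrite /induced; move: (core e) vC => S vS; apply/setP => u; rewrite !inE vS /= andbC.
have -> : [set u | e v u] :\: C = [set u | e v u && (u \notin C)].
  by move: (core e) => S; apply/setP => u; rewrite !inE andbC.
by move=> ->; move: vC; rewrite inE => /eqP.
Qed.

Lemma missing_le v : v \in C ->
  #|[set i | v \notin cover (F1 i)]| <= #|[set u | e v u && (u \notin C)]|.
Proof.
move=> vC; have := cardsC [set i | v \in cover (F1 i)].
have -> : ~: [set i | v \in cover (F1 i)] = [set i | v \notin cover (F1 i)].
  by apply/setP => i; rewrite !inE.
rewrite card_ord => H; have := deg_split vC; have := nbr_core_le v; lia.
Qed.

Lemma sumU : \sum_(i < D) #|U i| <= #|~: C| * D.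
Proof.
have -> : \sum_(i < D) #|U i| = \sum_(i < D) \sum_v ((v \in C) && (v \notin cover (F1 i))).
  apply: eq_bigr => i _; rewrite /U -card_ind; apply: eq_card => v; rewrite !inE andbC.
  by [].
rewrite exchange_big /=.
apply: (@leq_trans (\sum_v \sum_u ((v \in C) && e v u && (u \notin C)))).
  apply: leq_sum => v _; case vC: (v \in C) => /=; last by rewrite big1.
  rewrite -!card_ind; apply: leq_trans (missing_le vC) _.
  by rewrite subset_leq_card //; apply/subsetP => u; rewrite !inE.
rewrite exchange_big /= -sum1_card big_distrl /= [X in _ <= X]big_mkcond /=.
apply: leq_sum => u _; rewrite in_setC; case uC: (u \in C) => /=.
  by rewrite big1 // => v _; rewrite andbF.
rewrite mul1n; apply: leq_trans (deg_le u); rewrite /deg card_ind.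
by apply: leq_sum => v _; rewrite andbT Hs; case: (v \in C).
Qed.

Lemma cardF i : 2 * #|F i| <= #|C| + #|U i|.
Proof.
have h1 : #|F i| <= #|F1 i| + #|F2 i| by rewrite /F cardsU leq_subr.
have h2 : #|F2 i| <= #|U i| by apply: leq_imset_card.
have h3 : #|F1 i| * 2 = #|cover (F1 i)|.
  have := F1_triv i; rewrite /trivIset => /eqP <-.
  by rewrite -sum_nat_const; apply: eq_bigr => A HA; rewrite (F1_card HA).
have h4 : #|U i| = #|C| - #|cover (F1 i)| by rewrite /U cardsDS // cover_F1.
have h5 : #|cover (F1 i)| <= #|C| by apply: subset_leq_card; apply: cover_F1.
lia.
Qed.

Lemma q_spec i v : v \in U i -> e v (q v) && (q v \notin C).
Proof.
move=> vU; have vC : v \in C by move: vU; rewrite /U in_setD => /andP [].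
rewrite /q; case: pickP => [w -> //| none].
have := missing_le vC.
have -> : #|[set u | e v u && (u \notin C)]| = 0.
  by apply/eqP; rewrite cards_eq0; apply/eqP/setP => u; rewrite inE none in_set0.
rewrite leqn0 cards_eq0 => /eqP E.
have : i \in [set i | v \notin cover (F1 i)].
  by rewrite inE; move: vU; rewrite /U in_setD => /andP [].
by rewrite E in_set0.
Qed.

Lemma q_C v : q v \in C -> q v = v.
Proof. by rewrite /q; case: pickP => [w /andP [_ /negbTE ->] | _]. Qed.

Lemma F_sub i : F i \subset edges e.
Proof.
rewrite /F subUset F1_sub /=; apply/subsetP => A /imsetP [v vU ->].
apply/edgesP; exists v, (q v); split => //; by case/andP: (q_spec vU).
Qed.

Lemma hit i x : x \in C -> exists y, e x y /\ [set x; y] \in F i.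
Proof.
move=> xC; case xc: (x \in cover (F1 i)).
  by case: (in_cover xc) => y [exy H]; exists y; rewrite /F in_setU H.
have xU : x \in U i by rewrite /U in_setD xc xC.
case/andP: (q_spec xU) => exq _; exists (q x); split => //.
by rewrite /F in_setU; apply/orP; right; apply/imsetP; exists x.
Qed.

Lemma hit_cases i x z : x \in C -> e x z -> [set x; z] \in F i ->
  if x \in cover (F1 i) then [set x; z] \in F1 i else z == q x.
Proof.
move=> xC exz; rewrite /F in_setU => /orP [H|].
  have -> : x \in cover (F1 i) by apply/bigcupP; exists [set x; z]; rewrite ?set21.
  by [].
move=> /imsetP [v vU E].
have xv : x = v.
  have : x \in [set v; q v] by rewrite -E set21.
  case/set2P => // xq; rewrite xq in xC; rewrite (q_C xC) in xq; exact: xq.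
subst v; move: (vU); rewrite /U in_setD => /andP [/negbTE -> _].
have : z \in [set x; q x] by rewrite -E set22.
case/set2P => [zx|->]; last by []; move: exz; by rewrite zx Hi.
Qed.

Lemma uniq_hit i x z1 z2 : x \in C -> e x z1 -> e x z2 ->
  [set x; z1] \in F i -> [set x; z2] \in F i -> z1 = z2.
Proof.
move=> xC e1 e2 H1 H2.
have := hit_cases xC e1 H1; have := hit_cases xC e2 H2.
case: (x \in cover (F1 i)); last by move=> /eqP -> /eqP ->.
move=> G2 G1; apply: set2_inj (neq_of_e e1) _.
apply: proper (F1_edge G1) (F1_edge G2) _ _.
  by rewrite (F1_col G1) (F1_col G2).
by apply/set0Pn; exists x; rewrite inE !set21.
Qed.

Lemma deg_rem_le i x : deg (remove_edges e (F i)) x <= D.-1.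
Proof.
case xC: (x \in C).
  case: (hit i xC) => y [exy Hy].
  have : #|[set z | e x z]| = D by move: xC; rewrite inE => /eqP.
  rewrite (cardsD1 y) inE exy /= => Hd.
  rewrite /deg -Hd /=; apply: subset_leq_card; apply/subsetP => z.
  rewrite !inE /remove_edges => /andP [exz nF]; rewrite exz andbT.
  by apply: contraNneq nF => ->.
have : deg e x < D by apply: deg_noncore; rewrite xC.
move=> H; have D0 : 0 < D by apply: leq_ltn_trans (leq0n _) H.
rewrite -ltnS prednK //; apply: (leq_ltn_trans _ H); apply: subset_leq_card; apply/subsetP => z.
by rewrite !inE /remove_edges => /andP [].
Qed.

Lemma deg_rem_ge i x : x \in C -> D.-1 <= deg (remove_edges e (F i)) x.
Proof.
move=> xC.
have Hd : #|[set z | e x z]| = D by move: xC; rewrite inE => /eqP.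
have Uh := uniq_hit (i := i) xC; move: (F i) Uh => B Uh.
have Hs1 : [set z | e x z] \subset [set z | remove_edges e B x z] :|: [set z | e x z && ([set x; z] \in B)].
  apply/subsetP => z; rewrite !inE /remove_edges => ->; by case: ([set x; z] \in B).
have H1 : #|[set z | e x z && ([set x; z] \in B)]| <= 1.
  apply/card_le1_eqP => z1 z2; rewrite !inE => /andP [e1 h1] /andP [e2 h2].
  exact: Uh e2 e1 h2 h1.
have := subset_leq_card Hs1; rewrite cardsU Hd /deg; lia.
Qed.

Lemma Delta_rem i x : x \in C -> Delta (remove_edges e (F i)) = D.-1.
Proof.
move=> xC; apply/eqP; rewrite eqn_leq; apply/andP; split.
  by apply/bigmax_leqP => y _; apply: deg_rem_le.
by apply: leq_trans (deg_rem_ge i xC) _; rewrite /Delta; exact: leq_bigmax.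
Qed.

Lemma part1 : edges e != set0 -> 2 * esDelta e <= #|T|.
Proof.
case/set0Pn => A /edgesP [x0 [y0 [exy _]]].
have D0 : 0 < D.
  apply: leq_trans (deg_le x0); rewrite /deg card_gt0; apply/set0Pn; exists y0.
  by rewrite inE.
have [xm Exm] : {xm | D = deg e xm}.
  by rewrite /Delta; apply: eq_bigmax; apply/card_gt0P; exists x0.
have xmC : xm \in C by rewrite inE -Exm.
case: (@arg_minnP _ (Ordinal D0) xpredT (fun i => #|U i|) isT) => i _ Hmin.
have HU : #|U i| <= #|~: C|.
  have : D * #|U i| <= #|~: C| * D.
    apply: (@leq_trans (\sum_(j < D) #|U j|)); last exact: sumU.
    rewrite -[X in X * _](card_ord D) -sum_nat_const.
    by apply: leq_sum => j _; apply: Hmin.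
  rewrite mulnC leq_pmul2r //.
have HF : esDelta e <= #|F i|.
  rewrite /esDelta; apply: bigmin_le.
  by rewrite F_sub (Delta_rem i xmC) eqxx.
have := cardF i; have := cardsC C; lia.
Qed.

End Main.

Lemma colour_induced (T : finType) (e : rel T) (S : {set T}) k :
  edge_colourable e k -> edge_colourable (induced e S) k.
Proof.
case/existsP => c Hc; apply/existsP; exists c.
apply/forallP => A; apply/forallP => B; apply/implyP => /and4P [EA EB nAB nI].
have sub : forall X, X \in edges (induced e S) -> X \in edges e.
  move=> X /edgesP [x [y [/and3P [_ _ exy] ->]]]; apply/edgesP; by exists x, y.
by move/forallP: Hc => /(_ A) /forallP /(_ B) /implyP; apply; rewrite sub // sub // nAB nI.
Qed.

Lemma colour_all (T : finType) (e : rel T) :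
  edges e != set0 -> edge_colourable e #|edges e|.
Proof.
move=> ne; have E0 : 0 < #|edges e| by rewrite card_gt0.
pose c := [ffun A => insubd (Ordinal E0) (index A (enum (edges e))) : 'I_#|edges e|].
apply/existsP; exists c; apply/forallP => A; apply/forallP => B.
apply/implyP => /and4P [EA EB nAB _]; apply: contra nAB => /eqP cAB.
have vA : val (c A) = index A (enum (edges e)).
  by rewrite ffunE insubdK // unfold_in /= cardE index_mem mem_enum.
have vB : val (c B) = index B (enum (edges e)).
  by rewrite ffunE insubdK // unfold_in /= cardE index_mem mem_enum.
have hA : nth A (enum (edges e)) (index A (enum (edges e))) = A by rewrite nth_index // mem_enum.
have hB : nth A (enum (edges e)) (index B (enum (edges e))) = B by rewrite nth_index // mem_enum.
by apply/eqP; rewrite -[X in X = _]hA -vA cAB vB hB.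
Qed.

Lemma class1_col (T : finType) (e : rel T) :
  edges e != set0 -> class1 e -> edge_colourable e (Delta e).
Proof.
move=> ne; rewrite /class1 /chromatic_index => <-.
apply: (big_ind (fun v => edge_colourable e v)).
- exact: colour_all.
- by move=> x y Hx Hy; rewrite /minn; case: ifP.
- by [].
Qed.

Theorem corollary5p3 (T : finType) (e : rel T) :
  simple_graph e ->
  edges e != set0 ->
  (edge_colourable (induced e (core e)) (Delta e) ->
     2 * esDelta e <= #|T|) /\
  (class1 e -> 2 * esDelta e <= #|T|).
Proof.
move=> [Hs Hi] ne.
have P1 : edge_colourable (induced e (core e)) (Delta e) -> 2 * esDelta e <= #|T|.
  by case/existsP => c Hc; exact: (part1 Hs Hi Hc ne).
split => //; move=> H1; apply: P1; apply: colour_induced; exact: class1_col.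
Qed.
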